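(* Let $n\in\mathbb{Z}$, let $\beta:\mathbb{Z}\to\mathbb{C}$ have convergent increments, and let $d:\mathcal{A}\to A$ be the $n$-covariant derivation $d(a)=[U^n\beta(\mathbb{K}),a]$. Then $d$ is approximately inner if and only if $\beta(k+1)-\beta(k)\to0$ as $k\to\pm\infty$.
   Context: Let $\{E_k\}$ be the canonical basis of $\ell^2(\mathbb{Z})$, $UE_k=E_{k+1}$, $\mathbb{K}E_k=kE_k$, $a(\mathbb{K})E_k=a(k)E_k$. $A$ is the C$^*$-algebra generated by $U$ and all $a(\mathbb{K})$ with $a$ having finite limits at $\pm\infty$; $\mathcal{A}$ is the algebra of finite sums $\sum_mU^ma_m(\mathbb{K})$ with each $a_m$ eventually constant (constant on $k\ge k_0$ and on $k\le-k_0$ for some $k_0$). A function $\beta$ has convergent increments if $k\mapsto\beta(k)-\beta(k-1)$ has finite limits as $k\to\pm\infty$ (this guarantees $d$ maps $\mathcal{A}$ into $A$). A derivation $d:\mathcal{A}\to A$ is approximately inner if there are $x_j\in A$ with $d(a)=\lim_j[x_j,a]$ in norm for all $a\in\mathcal{A}$. *)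

(* Defs.v *)
From Stdlib Require Import Reals ZArith List.
From Coquelicot Require Import Coquelicot.
Open Scope R_scope.

(* Vectors: functions Z -> C; the Hilbert space l^2(Z) is the set of square-summable ones.
   Coordinate k of x is <x, E_k>. *)
Definition vec := Z -> C.

(* sum over Z of |x k|^2, enumerated as k = 0,1,2,... and k = -1,-2,... *)
Definition sq_terms (x : vec) (n : nat) : R :=
  (Cmod (x (Z.of_nat n)))^2 + (Cmod (x (- Z.of_nat n - 1)%Z))^2.

Definition l2 (x : vec) : Prop := ex_series (sq_terms x).
Definition vnorm (x : vec) : R := sqrt (Series (sq_terms x)).

Definition op := vec -> vec.

Definition op_sub (S T : op) : op := fun x k => Cminus (S x k) (T x k).
Definition op_add (S T : op) : op := fun x k => Cplus (S x k) (T x k).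
Definition op_scal (c : C) (T : op) : op := fun x k => Cmult c (T x k).
Definition op_comp (S T : op) : op := fun x => S (T x).
Definition commutator (S T : op) : op := op_sub (op_comp S T) (op_comp T S).

Definition opdist_le (T : op) (c : R) : Prop :=
  forall x, l2 x -> l2 (T x) /\ vnorm (T x) <= c * vnorm x.

(* The bilateral shift U E_k = E_{k+1}, i.e. (U x)(k) = x(k-1), and its inverse. *)
Definition Ushift : op := fun x k => x (k - 1)%Z.
Definition Ushift_inv : op := fun x k => x (k + 1)%Z.

(* a(K) E_k = a(k) E_k *)
Definition mult_op (a : Z -> C) : op := fun x k => Cmult (a k) (x k).

(* U^m a(K): E_k |-> a(k) E_{k+m}, i.e. (U^m a(K) x)(k) = a(k-m) x(k-m). *)
Definition Upow_mult (m : Z) (a : Z -> C) : op :=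
  fun x k => Cmult (a (k - m)%Z) (x (k - m)%Z).

Definition has_limits_pm (a : Z -> C) : Prop :=
  (exists Lp : C, forall eps, 0 < eps -> exists N : Z,
      forall k, (N <= k)%Z -> Cmod (Cminus (a k) Lp) < eps) /\
  (exists Lm : C, forall eps, 0 < eps -> exists N : Z,
      forall k, (k <= N)%Z -> Cmod (Cminus (a k) Lm) < eps).

Definition eventually_const (a : Z -> C) : Prop :=
  exists k0 : Z, (forall k, (k0 <= k)%Z -> a k = a k0) /\
                 (forall k, (k <= - k0)%Z -> a k = a (- k0)%Z).

Definition closed_alg (S : op -> Prop) : Prop :=
  S Ushift /\ S Ushift_inv /\
  (forall a, has_limits_pm a -> S (mult_op a)) /\
  (forall T1 T2, S T1 -> S T2 -> S (op_add T1 T2)) /\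
  (forall c T, S T -> S (op_scal c T)) /\
  (forall T1 T2, S T1 -> S T2 -> S (op_comp T1 T2)) /\
  (forall T, (forall eps, 0 < eps -> exists T0, S T0 /\ opdist_le (op_sub T T0) eps) -> S T).

(* A : the C*-algebra generated by U and the a(K) = the smallest norm-closed
   algebra containing U, U^{-1}=U^* and all a(K) (the generating set is *-closed). *)
Definition in_A (T : op) : Prop := forall S, closed_alg S -> S T.

(* Elements of the dense algebra \mathcal{A}: finite sums sum_m U^m a_m(K),
   given as a list of pairs (m, a_m) with each a_m eventually constant. *)
Definition calA_elem (l : list (Z * (Z -> C))) : op :=
  fun x k => List.fold_right (fun p acc => Cplus (Upow_mult (fst p) (snd p) x k) acc) (RtoC 0) l.

Definition calA_list (l : list (Z * (Z -> C))) : Prop :=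
  List.Forall (fun p => eventually_const (snd p)) l.

Definition approx_inner (d : op -> op) : Prop :=
  exists X : nat -> op, (forall j, in_A (X j)) /\
    forall l, calA_list l ->
      forall eps, 0 < eps -> exists N : nat, forall j, (N <= j)%nat ->
        opdist_le (op_sub (d (calA_elem l)) (commutator (X j) (calA_elem l))) eps.

Definition conv_increments (beta : Z -> C) : Prop :=
  has_limits_pm (fun k => Cminus (beta k) (beta (k - 1)%Z)).

Definition cov_derivation (n : Z) (beta : Z -> C) : op -> op :=
  fun a => commutator (Upow_mult n beta) a.

Definition increments_to_zero (beta : Z -> C) : Prop :=
  (forall eps, 0 < eps -> exists N : Z, forall k, (N <= k)%Z ->
      Cmod (Cminus (beta (k + 1)%Z) (beta k)) < eps) /\
  (forall eps, 0 < eps -> exists N : Z, forall k, (k <= N)%Z ->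
      Cmod (Cminus (beta (k + 1)%Z) (beta k)) < eps).

(* Main.v *)
Require Import Defs.
From Stdlib Require Import Reals ZArith List.
From Coquelicot Require Import Coquelicot.
From Stdlib Require Import Lra Lia FunctionalExtensionality.
Open Scope R_scope.

Fixpoint W (x : vec) (a : Z) (len : nat) : R :=
  match len with O => 0 | S l => (Cmod (x a))^2 + W x (a+1)%Z l end.

Lemma W_nonneg x a len : 0 <= W x a len.
Proof.
  revert a; induction len; intros a; simpl. lra.
  specialize (IHlen (a+1)%Z). nra.
Qed.

Lemma W_split x l1 l2 : forall a, W x a (l1 + l2) = W x a l1 + W x (a + Z.of_nat l1)%Z l2.
Proof.
  induction l1; intros a; simpl.
  - replace (a+0)%Z with a by lia. lra.
  - rewrite IHl1. replace (a + 1 + Z.of_nat l1)%Z with (a + Z.pos (Pos.of_succ_nat l1))%Z by lia. lra.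
Qed.

Lemma W_sub x a len b L : (b <= a)%Z -> (a + Z.of_nat len <= b + Z.of_nat L)%Z ->
  W x a len <= W x b L.
Proof.
  intros H1 H2.
  set (i := Z.to_nat (a - b)).
  set (j := (L - i - len)%nat).
  replace L with (i + (len + j))%nat by (unfold i, j; lia).
  rewrite W_split, W_split.
  replace (b + Z.of_nat i)%Z with a by (unfold i; lia).
  pose proof (W_nonneg x b i). pose proof (W_nonneg x (a + Z.of_nat len)%Z j). lra.
Qed.

Lemma W_cons x a l : W x a (S l) = (Cmod (x a))^2 + W x (a+1)%Z l.
Proof. reflexivity. Qed.

Lemma W_snoc x a l : W x a (S l) = W x a l + (Cmod (x (a + Z.of_nat l)%Z))^2.
Proof.
  replace (S l) with (l + 1)%nat by lia. rewrite W_split. simpl. lra.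
Qed.

Lemma sum_W x N : sum_n (sq_terms x) N = W x (- Z.of_nat N - 1)%Z (2*N+2).
Proof.
  induction N.
  - rewrite sum_O. unfold sq_terms. simpl. lra.
  - rewrite sum_Sn, IHN. change (@plus _ ?u ?v) with (Rplus u v). unfold sq_terms.
    replace (2 * S N + 2)%nat with (S (S (2*N+2))) by lia.
    rewrite W_snoc, W_cons.
    replace (- Z.of_nat (S N) - 1 + 1)%Z with (- Z.of_nat N - 1)%Z by lia.
    replace (- Z.of_nat (S N) - 1 + Z.of_nat (S (2 * N + 2)))%Z with (Z.of_nat (S N)) by lia.
    lra.
Qed.

Lemma sq_terms_nonneg x n : 0 <= sq_terms x n.
Proof. unfold sq_terms. pose proof (Cmod_ge_0 (x (Z.of_nat n))).
  pose proof (Cmod_ge_0 (x (- Z.of_nat n - 1)%Z)). nra. Qed.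

Lemma Series_nonneg x : 0 <= Series (sq_terms x) \/ True.
Proof. right; auto. Qed.

Lemma windows_le x a len : l2 x -> W x a len <= (vnorm x)^2.
Proof.
  intros Hx.
  set (N := Z.to_nat (Z.abs a + Z.of_nat len)).
  assert (H1 : W x a len <= W x (- Z.of_nat N - 1)%Z (2*N+2)).
  { apply W_sub; unfold N; lia. }
  rewrite <- sum_W in H1.
  pose proof (Series_correct _ Hx) as HS.
  assert (Hinc : forall n, sum_n (sq_terms x) n <= sum_n (sq_terms x) (S n)).
  { intros n. rewrite sum_Sn. change (@plus _ ?u ?v) with (Rplus u v). pose proof (sq_terms_nonneg x (S n)). lra. }
  pose proof (is_lim_seq_incr_compare _ _ HS Hinc N) as H2.
  assert (H0 : 0 <= Series (sq_terms x)).
  { pose proof (is_lim_seq_incr_compare _ _ HS Hinc 0) as H3. rewrite sum_O in H3.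
    pose proof (sq_terms_nonneg x 0). lra. }
  unfold vnorm. rewrite pow2_sqrt by lra. exact (Rle_trans _ _ _ H1 H2). Qed.

Lemma vnorm_nonneg x : 0 <= vnorm x.
Proof. apply sqrt_pos. Qed.

Lemma norm_of_windows y M : (forall a len, sqrt (W y a len) <= M) -> l2 y /\ vnorm y <= M.
Proof.
  intros H.
  assert (HM : 0 <= M). { specialize (H 0%Z 0%nat). simpl in H. rewrite sqrt_0 in H. lra. }
  assert (HW : forall a len, W y a len <= M^2).
  { intros a len. specialize (H a len). pose proof (W_nonneg y a len).
    pose proof (sqrt_pos (W y a len)). rewrite <- (pow2_sqrt (W y a len)) by lra. nra. }
  assert (Hinc : forall n, sum_n (sq_terms y) n <= sum_n (sq_terms y) (S n)).
  { intros n. rewrite sum_Sn. change (@plus _ ?u ?v) with (Rplus u v). pose proof (sq_terms_nonneg y (S n)). lra. }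
  assert (Hb : forall n, sum_n (sq_terms y) n <= M^2).
  { intros n. rewrite sum_W. apply HW. }
  destruct (ex_finite_lim_seq_incr _ _ Hinc Hb) as [l Hl].
  assert (Hs : is_series (sq_terms y) l) by exact Hl.
  split. exists l; exact Hs.
  unfold vnorm. rewrite (is_series_unique _ _ Hs).
  pose proof (is_lim_seq_le _ _ _ _ Hb Hl (is_lim_seq_const (M^2))) as Hle. simpl in Hle.
  rewrite <- (sqrt_pow2 M) by lra. apply sqrt_le_1_alt. exact Hle.
Qed.

Lemma sqrtW_le x a len : l2 x -> sqrt (W x a len) <= vnorm x.
Proof.
  intros Hx. rewrite <- (sqrt_pow2 (vnorm x)) by apply vnorm_nonneg.
  apply sqrt_le_1_alt. apply windows_le; auto.
Qed.

Lemma mink_step p q s u v z : 0 <= p -> 0 <= q -> 0 <= s -> s <= p + q -> 0 <= u -> 0 <= v -> 0 <= z ->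
  z <= u + v -> sqrt (s^2 + z^2) <= sqrt (p^2 + u^2) + sqrt (q^2 + v^2).
Proof.
  intros.
  set (A := sqrt (p^2+u^2)). set (B := sqrt (q^2+v^2)).
  assert (HA : A^2 = p^2+u^2) by (apply pow2_sqrt; nra).
  assert (HB : B^2 = q^2+v^2) by (apply pow2_sqrt; nra).
  assert (A0 : 0 <= A) by apply sqrt_pos. assert (B0 : 0 <= B) by apply sqrt_pos.
  assert (Hk : p*q + u*v <= A*B).
  { assert ((p*q+u*v)^2 <= (A*B)^2).
    { replace ((A*B)^2) with (A^2*B^2) by ring. rewrite HA, HB.
      assert (0 <= (p*v - u*q)^2) by apply pow2_ge_0. nra. }
    destruct (Rle_lt_dec (p*q+u*v) (A*B)) as [h|h]; [exact h|].
    assert (0 <= A*B) by nra. assert (0 < p*q+u*v + A*B) by lra.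
    assert (0 < (p*q+u*v - A*B) * (p*q+u*v + A*B)) by (apply Rmult_lt_0_compat; lra).
    nra. }
  rewrite <- (sqrt_pow2 (A+B)) by lra. apply sqrt_le_1_alt. nra.
Qed.

Lemma W_mink x y a len :
  sqrt (W (fun k => Cplus (x k) (y k)) a len) <= sqrt (W x a len) + sqrt (W y a len).
Proof.
  revert a; induction len; intros a; simpl.
  - rewrite sqrt_0. lra.
  - specialize (IHlen (a+1)%Z).
    pose proof (W_nonneg x (a+1)%Z len). pose proof (W_nonneg y (a+1)%Z len).
    pose proof (W_nonneg (fun k => Cplus (x k) (y k)) (a+1)%Z len).
    rewrite <- (pow2_sqrt (W x (a+1)%Z len)) by auto.
    rewrite <- (pow2_sqrt (W y (a+1)%Z len)) by auto.
    rewrite <- (pow2_sqrt (W (fun k => Cplus (x k) (y k)) (a+1)%Z len)) by auto.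
    apply mink_step; try apply Cmod_ge_0; try apply sqrt_pos; auto.
    apply Cmod_triangle.
Qed.

Lemma l2_add x y : l2 x -> l2 y ->
  l2 (fun k => Cplus (x k) (y k)) /\ vnorm (fun k => Cplus (x k) (y k)) <= vnorm x + vnorm y.
Proof.
  intros Hx Hy. apply norm_of_windows. intros a len.
  eapply Rle_trans. apply W_mink.
  pose proof (sqrtW_le x a len Hx). pose proof (sqrtW_le y a len Hy). lra.
Qed.

Lemma W_shift g r a len : W (fun k => g (k - r)%Z) a len = W g (a - r)%Z len.
Proof.
  revert a; induction len; intros a; simpl. auto.
  rewrite IHlen. replace (a + 1 - r)%Z with (a - r + 1)%Z by lia. auto.
Qed.

Lemma W_mult f x C a len : (forall k, Cmod (f k) <= C) ->
  W (fun k => Cmult (f k) (x k)) a len <= C^2 * W x a len.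
Proof.
  intros Hf. revert a; induction len; intros a; simpl. lra.
  specialize (IHlen (a+1)%Z). rewrite Cmod_mult.
  pose proof (Hf a). pose proof (Cmod_ge_0 (f a)). pose proof (Cmod_ge_0 (x a)).
  assert (Cmod (f a) ^2 <= C^2) by nra.
  assert (Cmod (f a) * Cmod (x a) ^ 2 <= C * Cmod (x a) ^2) by nra.
  pose proof (pow2_ge_0 (Cmod (x a))). nra.
Qed.

Lemma opdist_upow r c C : (forall k, Cmod (c k) <= C) -> opdist_le (Upow_mult r c) C.
Proof.
  intros Hc x Hx.
  assert (HC : 0 <= C) by (pose proof (Hc 0%Z); pose proof (Cmod_ge_0 (c 0%Z)); lra).
  apply norm_of_windows. intros a len. unfold Upow_mult.
  rewrite (W_shift (fun k => Cmult (c k) (x k))).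
  pose proof (W_mult c x C (a - r)%Z len Hc).
  pose proof (windows_le x (a - r)%Z len Hx).
  pose proof (vnorm_nonneg x).
  rewrite <- (sqrt_pow2 (C * vnorm x)) by nra. apply sqrt_le_1_alt. nra.
Qed.

Lemma coef_bound y k : l2 y -> Cmod (y k) <= vnorm y.
Proof.
  intros Hy. pose proof (sqrtW_le y k 1 Hy). rewrite W_cons in H. change (W y (k+1)%Z 0) with 0 in H.
  replace (Cmod (y k) ^ 2 + 0) with (Cmod (y k) ^ 2) in H by lra.
  rewrite sqrt_pow2 in H by apply Cmod_ge_0. auto.
Qed.

Lemma opdist_ext T T' c : (forall x, l2 x -> forall k, T x k = T' x k) -> opdist_le T c -> opdist_le T' c.
Proof.
  intros He H x Hx. assert (T x = T' x) by (apply functional_extensionality; auto).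
  rewrite <- H0. auto.
Qed.

Lemma W_zero y a len : (forall k, y k = RtoC 0) -> W y a len = 0.
Proof.
  intros Hy. revert a; induction len; intros a; simpl. auto.
  rewrite IHlen, Hy, Cmod_0. ring.
Qed.

Lemma opdist_zero T c : (forall x, l2 x -> forall k, T x k = RtoC 0) -> 0 <= c -> opdist_le T c.
Proof.
  intros H Hc x Hx. apply norm_of_windows. intros a len. rewrite W_zero by auto.
  rewrite sqrt_0. pose proof (vnorm_nonneg x). nra.
Qed.

Lemma opdist_add T1 T2 c1 c2 : opdist_le T1 c1 -> opdist_le T2 c2 -> opdist_le (op_add T1 T2) (c1 + c2).
Proof.
  intros H1 H2 x Hx. destruct (H1 x Hx) as [A1 B1]. destruct (H2 x Hx) as [A2 B2].
  destruct (l2_add _ _ A1 A2) as [A3 B3]. unfold op_add. split; auto. lra.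
Qed.

Lemma opdist_comp T1 T2 c1 c2 : 0 <= c1 -> opdist_le T1 c1 -> opdist_le T2 c2 -> opdist_le (op_comp T1 T2) (c1 * c2).
Proof.
  intros Hc H1 H2 x Hx. destruct (H2 x Hx) as [A2 B2]. destruct (H1 _ A2) as [A1 B1].
  unfold op_comp. split; auto. nra.
Qed.

Lemma opdist_mono T c c' : c <= c' -> opdist_le T c -> opdist_le T c'.
Proof.
  intros Hc H x Hx. destruct (H x Hx). split; auto. pose proof (vnorm_nonneg x). nra.
Qed.


Definition bounded (c : Z -> C) := exists K, forall k, Cmod (c k) <= K.
Definition slowvar (c : Z -> C) :=
  (forall eps, 0 < eps -> exists N : Z, forall k, (N <= k)%Z -> Cmod (Cminus (c (k+1)%Z) (c k)) < eps) /\
  (forall eps, 0 < eps -> exists N : Z, forall k, (k <= N)%Z -> Cmod (Cminus (c (k+1)%Z) (c k)) < eps).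
Definition goodp (p : Z * (Z -> C)) := bounded (snd p) /\ slowvar (snd p).
Definition good (l : list (Z * (Z -> C))) := List.Forall goodp l.

Lemma bounded_nonneg (c : Z -> C) K : (forall k, Cmod (c k) <= K) -> 0 <= K.
Proof. intros H. pose proof (H 0%Z). pose proof (Cmod_ge_0 (c 0%Z)). lra. Qed.

Lemma Cmod_sub_tri a b c : Cmod (Cminus a c) <= Cmod (Cminus a b) + Cmod (Cminus b c).
Proof.
  replace (Cminus a c) with (Cplus (Cminus a b) (Cminus b c)) by (unfold Cminus; ring).
  apply Cmod_triangle.
Qed.

Lemma bounded_mul c d : bounded c -> bounded d -> bounded (fun k => Cmult (c k) (d k)).
Proof.
  intros [K1 H1] [K2 H2]. exists (K1 * K2). intros k. rewrite Cmod_mult.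
  pose proof (bounded_nonneg _ _ H1). pose proof (Cmod_ge_0 (c k)). pose proof (Cmod_ge_0 (d k)).
  pose proof (H1 k). pose proof (H2 k). nra.
Qed.

Lemma bounded_add c d : bounded c -> bounded d -> bounded (fun k => Cplus (c k) (d k)).
Proof.
  intros [K1 H1] [K2 H2]. exists (K1 + K2). intros k.
  eapply Rle_trans. apply Cmod_triangle. pose proof (H1 k). pose proof (H2 k). lra.
Qed.

Lemma bounded_shift c s : bounded c -> bounded (fun k => c (k + s)%Z).
Proof. intros [K H]. exists K. auto. Qed.

Lemma bounded_const a : bounded (fun _ => a).
Proof. exists (Cmod a). intros; lra. Qed.

Lemma slowvar_const a : slowvar (fun _ => a).
Proof.
  split; intros eps He; exists 0%Z; intros k _;
  replace (Cminus a a) with (RtoC 0) by (unfold Cminus; ring); rewrite Cmod_0; lra.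
Qed.

Lemma slowvar_add c d : slowvar c -> slowvar d -> slowvar (fun k => Cplus (c k) (d k)).
Proof.
  intros [Hc1 Hc2] [Hd1 Hd2]. split; intros eps He.
  - destruct (Hc1 (eps/2)) as [N1 H1]; [lra|]. destruct (Hd1 (eps/2)) as [N2 H2]; [lra|].
    exists (Z.max N1 N2). intros k Hk.
    replace (Cminus (Cplus (c (k+1)%Z) (d (k+1)%Z)) (Cplus (c k) (d k))) with
      (Cplus (Cminus (c (k+1)%Z) (c k)) (Cminus (d (k+1)%Z) (d k))) by (unfold Cminus; ring).
    eapply Rle_lt_trans. apply Cmod_triangle. specialize (H1 k ltac:(lia)). specialize (H2 k ltac:(lia)). lra.
  - destruct (Hc2 (eps/2)) as [N1 H1]; [lra|]. destruct (Hd2 (eps/2)) as [N2 H2]; [lra|].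
    exists (Z.min N1 N2). intros k Hk.
    replace (Cminus (Cplus (c (k+1)%Z) (d (k+1)%Z)) (Cplus (c k) (d k))) with
      (Cplus (Cminus (c (k+1)%Z) (c k)) (Cminus (d (k+1)%Z) (d k))) by (unfold Cminus; ring).
    eapply Rle_lt_trans. apply Cmod_triangle. specialize (H1 k ltac:(lia)). specialize (H2 k ltac:(lia)). lra.
Qed.

Lemma slowvar_shift c s : slowvar c -> slowvar (fun k => c (k + s)%Z).
Proof.
  intros [H1 H2]. split; intros eps He.
  - destruct (H1 eps He) as [N HN]. exists (N - s)%Z. intros k Hk.
    replace (k + 1 + s)%Z with (k + s + 1)%Z by lia. apply HN. lia.
  - destruct (H2 eps He) as [N HN]. exists (N - s)%Z. intros k Hk.
    replace (k + 1 + s)%Z with (k + s + 1)%Z by lia. apply HN. lia.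
Qed.

Lemma mul_diff_bound a b c d Ka Kd : Cmod a <= Ka -> Cmod d <= Kd ->
  Cmod (Cminus (Cmult a b) (Cmult c d)) <= Ka * Cmod (Cminus b d) + Kd * Cmod (Cminus a c).
Proof.
  intros H1 H2.
  replace (Cminus (Cmult a b) (Cmult c d)) with
    (Cplus (Cmult a (Cminus b d)) (Cmult (Cminus a c) d)) by (unfold Cminus; ring).
  eapply Rle_trans. apply Cmod_triangle. rewrite !Cmod_mult.
  pose proof (Cmod_ge_0 (Cminus b d)). pose proof (Cmod_ge_0 (Cminus a c)).
  pose proof (Cmod_ge_0 a). pose proof (Cmod_ge_0 d). nra.
Qed.

Lemma small_prod K t d : 0 <= K -> 0 < t -> 0 <= d -> d < t -> K * d < (K+1) * t.
Proof. intros. nra. Qed.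

Lemma slowvar_mul c d : bounded c -> bounded d -> slowvar c -> slowvar d ->
  slowvar (fun k => Cmult (c k) (d k)).
Proof.
  intros [Kc Hc] [Kd Hd] [Hc1 Hc2] [Hd1 Hd2].
  pose proof (bounded_nonneg _ _ Hc). pose proof (bounded_nonneg _ _ Hd).
  split; intros eps He.
  - destruct (Hc1 (eps/(2*(Kd+1)))) as [N1 H1]. { apply Rdiv_lt_0_compat; lra. }
    destruct (Hd1 (eps/(2*(Kc+1)))) as [N2 H2]. { apply Rdiv_lt_0_compat; lra. }
    exists (Z.max N1 N2). intros k Hk.
    eapply Rle_lt_trans. apply (mul_diff_bound _ _ _ _ Kc Kd); auto.
    specialize (H1 k ltac:(lia)). specialize (H2 k ltac:(lia)).
    assert (P1 : 0 < eps/(2*(Kc+1))) by (apply Rdiv_lt_0_compat; lra).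
    assert (P2 : 0 < eps/(2*(Kd+1))) by (apply Rdiv_lt_0_compat; lra).
    pose proof (small_prod Kc _ _ H P1 (Cmod_ge_0 _) H2).
    pose proof (small_prod Kd _ _ H0 P2 (Cmod_ge_0 _) H1).
    replace ((Kc+1) * (eps / (2 * (Kc + 1)))) with (eps/2) in * by (field; lra).
    replace ((Kd+1) * (eps / (2 * (Kd + 1)))) with (eps/2) in * by (field; lra).
    lra.
  - destruct (Hc2 (eps/(2*(Kd+1)))) as [N1 H1]. { apply Rdiv_lt_0_compat; lra. }
    destruct (Hd2 (eps/(2*(Kc+1)))) as [N2 H2]. { apply Rdiv_lt_0_compat; lra. }
    exists (Z.min N1 N2). intros k Hk.
    eapply Rle_lt_trans. apply (mul_diff_bound _ _ _ _ Kc Kd); auto.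
    specialize (H1 k ltac:(lia)). specialize (H2 k ltac:(lia)).
    assert (P1 : 0 < eps/(2*(Kc+1))) by (apply Rdiv_lt_0_compat; lra).
    assert (P2 : 0 < eps/(2*(Kd+1))) by (apply Rdiv_lt_0_compat; lra).
    pose proof (small_prod Kc _ _ H P1 (Cmod_ge_0 _) H2).
    pose proof (small_prod Kd _ _ H0 P2 (Cmod_ge_0 _) H1).
    replace ((Kc+1) * (eps / (2 * (Kc + 1)))) with (eps/2) in * by (field; lra).
    replace ((Kd+1) * (eps / (2 * (Kd + 1)))) with (eps/2) in * by (field; lra).
    lra.
Qed.


Lemma calA_cons p l x k : calA_elem (p :: l) x k = Cplus (Upow_mult (fst p) (snd p) x k) (calA_elem l x k).
Proof. reflexivity. Qed.
Lemma calA_nil x k : calA_elem nil x k = RtoC 0.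
Proof. reflexivity. Qed.

Lemma upow_add_x r c u v k : Upow_mult r c (fun i => Cplus (u i) (v i)) k = Cplus (Upow_mult r c u k) (Upow_mult r c v k).
Proof. unfold Upow_mult. ring. Qed.
Lemma upow_sub_x r c u v k : Upow_mult r c (fun i => Cminus (u i) (v i)) k = Cminus (Upow_mult r c u k) (Upow_mult r c v k).
Proof. unfold Upow_mult, Cminus. ring. Qed.

Lemma calA_add_x l u v k : calA_elem l (fun i => Cplus (u i) (v i)) k = Cplus (calA_elem l u k) (calA_elem l v k).
Proof. induction l; rewrite ?calA_cons, ?calA_nil. ring. rewrite IHl, upow_add_x. ring. Qed.
Lemma calA_sub_x l u v k : calA_elem l (fun i => Cminus (u i) (v i)) k = Cminus (calA_elem l u k) (calA_elem l v k).
Proof. induction l; rewrite ?calA_cons, ?calA_nil. unfold Cminus; ring. rewrite IHl, upow_sub_x. unfold Cminus; ring. Qed.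

Lemma calA_app l1 l2 x k : calA_elem (l1 ++ l2) x k = Cplus (calA_elem l1 x k) (calA_elem l2 x k).
Proof. induction l1; simpl app; rewrite ?calA_cons, ?calA_nil. ring. rewrite IHl1. ring. Qed.

Definition scal_list (c : C) (l : list (Z * (Z -> C))) :=
  map (fun p => (fst p, fun k => Cmult c (snd p k))) l.

Lemma calA_scal c l x k : calA_elem (scal_list c l) x k = Cmult c (calA_elem l x k).
Proof. induction l; simpl scal_list; rewrite ?calA_cons, ?calA_nil. ring. rewrite IHl. simpl. unfold Upow_mult. ring. Qed.

Definition prod_list (l1 l2 : list (Z * (Z -> C))) :=
  flat_map (fun p => map (fun q => ((fst p + fst q)%Z, fun i => Cmult (snd p (i + fst q)%Z) (snd q i))) l2) l1.

Lemma calA_map_upow p l2 x k :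
  calA_elem (map (fun q => ((fst p + fst q)%Z, fun i => Cmult (snd p (i + fst q)%Z) (snd q i))) l2) x k
  = Upow_mult (fst p) (snd p) (calA_elem l2 x) k.
Proof.
  induction l2; simpl map; rewrite ?calA_cons, ?calA_nil.
  - unfold Upow_mult. rewrite calA_nil. ring.
  - rewrite IHl2. simpl fst; simpl snd. unfold Upow_mult at 1 3. rewrite calA_cons.
    unfold Upow_mult.
    replace (k - (fst p + fst a) + fst a)%Z with (k - fst p)%Z by lia.
    replace (k - fst p - fst a)%Z with (k - (fst p + fst a))%Z by lia. ring.
Qed.

Lemma calA_prod l1 l2 x k : calA_elem (prod_list l1 l2) x k = calA_elem l1 (calA_elem l2 x) k.
Proof.
  induction l1; simpl prod_list.
  - rewrite !calA_nil. auto.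
  - rewrite calA_app, calA_cons, IHl1, calA_map_upow. auto.
Qed.

Lemma good_app l1 l2 : good l1 -> good l2 -> good (l1 ++ l2).
Proof. intros. apply Forall_app; auto. Qed.

Lemma good_scal c l : good l -> good (scal_list c l).
Proof.
  intros H. unfold scal_list. apply Forall_map. eapply Forall_impl; [|exact H].
  intros [r f] [Hb Hs]. simpl in *. split.
  - apply (bounded_mul (fun _ => c) f); auto. apply bounded_const.
  - apply (slowvar_mul (fun _ => c) f); auto. apply bounded_const. apply slowvar_const.
Qed.

Lemma good_prod l1 l2 : good l1 -> good l2 -> good (prod_list l1 l2).
Proof.
  intros H1 H2. unfold prod_list. induction H1 as [|p l1 Hp H1 IH]; simpl. constructor.
  apply Forall_app. split; auto.
  apply Forall_map. eapply Forall_impl; [|exact H2].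
  intros q [Hb Hs]. destruct Hp as [Hpb Hps]. split; simpl.
  - apply (bounded_mul (fun i => snd p (i + fst q)%Z) (snd q)); auto. apply bounded_shift; auto.
  - apply (slowvar_mul (fun i => snd p (i + fst q)%Z) (snd q)); auto. apply bounded_shift; auto.
    apply slowvar_shift; auto.
Qed.

Lemma calA_bounded l : List.Forall (fun p => bounded (snd p)) l -> exists K, 0 <= K /\ opdist_le (calA_elem l) K.
Proof.
  intros H. induction H as [|p l Hp H IH].
  - exists 0. split. lra. apply opdist_zero; auto. lra.
  - destruct IH as [K [HK HT]]. destruct Hp as [Kp HKp].
    exists (Kp + K). split. pose proof (bounded_nonneg _ _ HKp). lra.
    apply (opdist_add (Upow_mult (fst p) (snd p)) (calA_elem l)); auto.
    apply opdist_upow; auto.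
Qed.

Lemma good_bounded l : good l -> List.Forall (fun p => bounded (snd p)) l.
Proof. intros H. eapply Forall_impl; [|exact H]. intros p [A B]; auto. Qed.

Definition ev (m : Z) : vec := fun i => if Z.eq_dec i m then RtoC 1 else RtoC 0.

Lemma W_ev_zero m a len : (m < a)%Z -> W (ev m) a len = 0.
Proof.
  revert a; induction len; intros a Ha. reflexivity.
  rewrite W_cons, IHlen by lia. unfold ev. destruct (Z.eq_dec a m). lia. rewrite Cmod_0. ring.
Qed.

Lemma W_ev_le m a len : W (ev m) a len <= 1.
Proof.
  revert a; induction len; intros a. simpl; lra.
  rewrite W_cons. unfold ev at 1. destruct (Z.eq_dec a m).
  - rewrite W_ev_zero by lia. rewrite Cmod_1. lra.
  - rewrite Cmod_0. specialize (IHlen (a+1)%Z). lra.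
Qed.

Lemma ev_l2 m : l2 (ev m) /\ vnorm (ev m) <= 1.
Proof.
  apply norm_of_windows. intros a len. rewrite <- sqrt_1. apply sqrt_le_1_alt. apply W_ev_le.
Qed.

Definition diag (l : list (Z * (Z -> C))) (r : Z) (k : Z) : C :=
  fold_right (fun p acc => Cplus (if Z.eq_dec (fst p) r then snd p k else RtoC 0) acc) (RtoC 0) l.

Lemma calA_ev l r m : calA_elem l (ev m) (m + r)%Z = diag l r m.
Proof.
  induction l. reflexivity.
  rewrite calA_cons, IHl. unfold diag; simpl fold_right. f_equal.
  unfold Upow_mult, ev. destruct (Z.eq_dec (fst a) r).
  - replace (m + r - fst a)%Z with m by lia. destruct (Z.eq_dec m m); [|lia]. ring.
  - destruct (Z.eq_dec (m + r - fst a) m). lia. ring.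
Qed.

Lemma diag_slowvar l r : good l -> slowvar (diag l r).
Proof.
  intros H. induction H as [|p l [Hb Hs] H IH].
  - apply slowvar_const.
  - unfold diag; simpl fold_right.
    apply (slowvar_add (fun k => if Z.eq_dec (fst p) r then snd p k else RtoC 0) (diag l r)); auto.
    destruct (Z.eq_dec (fst p) r); auto. apply slowvar_const.
Qed.


Lemma finite_bound (f : Z -> R) a len : exists K, forall k, (a <= k < a + Z.of_nat len)%Z -> f k <= K.
Proof.
  induction len.
  - exists 0. intros; lia.
  - destruct IHlen as [K HK]. exists (Rmax K (f (a + Z.of_nat len)%Z)). intros k Hk.
    destruct (Z.eq_dec k (a + Z.of_nat len)%Z).
    + subst. apply Rmax_r.
    + eapply Rle_trans; [apply HK; lia| apply Rmax_l].
Qed.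

Lemma Cmod_near a L : Cmod a <= Cmod (Cminus a L) + Cmod L.
Proof. replace a with (Cplus (Cminus a L) L) at 1 by (unfold Cminus; ring). apply Cmod_triangle. Qed.

Lemma limits_bounded a : has_limits_pm a -> bounded a.
Proof.
  intros [[Lp Hp] [Lm Hm]].
  destruct (Hp 1 ltac:(lra)) as [N1 H1]. destruct (Hm 1 ltac:(lra)) as [N2 H2].
  destruct (finite_bound (fun k => Cmod (a k)) N2 (Z.to_nat (N1 - N2))) as [K HK].
  exists (Rmax K (Rmax (Cmod Lp + 1) (Cmod Lm + 1))). intros k.
  destruct (Z_le_dec N1 k).
  - specialize (H1 k l). pose proof (Cmod_near (a k) Lp).
    eapply Rle_trans; [|eapply Rle_trans; [|apply Rmax_r]; apply Rmax_l]. lra.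
  - destruct (Z_le_dec k N2).
    + specialize (H2 k l). pose proof (Cmod_near (a k) Lm).
      eapply Rle_trans; [|eapply Rle_trans; [|apply Rmax_r]; apply Rmax_r]. lra.
    + eapply Rle_trans; [|apply Rmax_l]. apply HK. lia.
Qed.

Lemma Cmod_sym a b : Cmod (Cminus a b) = Cmod (Cminus b a).
Proof. replace (Cminus a b) with (Copp (Cminus b a)) by (unfold Cminus; ring). apply Cmod_opp. Qed.

Lemma limits_slowvar a : has_limits_pm a -> slowvar a.
Proof.
  intros [[Lp Hp] [Lm Hm]]. split; intros eps He.
  - destruct (Hp (eps/2) ltac:(lra)) as [N H]. exists N. intros k Hk.
    eapply Rle_lt_trans. apply (Cmod_sub_tri _ Lp).
    pose proof (H (k+1)%Z ltac:(lia)). pose proof (H k ltac:(lia)). rewrite (Cmod_sym Lp). lra.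
  - destruct (Hm (eps/2) ltac:(lra)) as [N H]. exists (N - 1)%Z. intros k Hk.
    eapply Rle_lt_trans. apply (Cmod_sub_tri _ Lm).
    pose proof (H (k+1)%Z ltac:(lia)). pose proof (H k ltac:(lia)). rewrite (Cmod_sym Lm). lra.
Qed.

Definition Sgood (T : op) : Prop :=
  forall eps, 0 < eps -> exists l, good l /\ opdist_le (op_sub T (calA_elem l)) eps.

Lemma mult_op_bound a K : (forall k, Cmod (a k) <= K) -> opdist_le (mult_op a) K.
Proof.
  intros H. apply (opdist_ext (Upow_mult 0 a)).
  - intros x _ k. unfold Upow_mult, mult_op. replace (k - 0)%Z with k by lia. auto.
  - apply opdist_upow; auto.
Qed.

Lemma single_good r a : bounded a -> slowvar a -> good ((r, a) :: nil).
Proof. intros. constructor. split; auto. constructor. Qed.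

Lemma Sgood_closed : closed_alg Sgood.
Proof.
  split; [|split; [|split; [|split; [|split; [|split]]]]].
  - intros eps He. exists ((1%Z, fun _ => RtoC 1) :: nil). split.
    apply single_good. apply bounded_const. apply slowvar_const.
    apply opdist_zero; [|lra]. intros x _ k. unfold op_sub, Ushift. rewrite calA_cons, calA_nil.
    unfold Upow_mult. simpl. unfold Cminus. ring.
  - intros eps He. exists (((-1)%Z, fun _ => RtoC 1) :: nil). split.
    apply single_good. apply bounded_const. apply slowvar_const.
    apply opdist_zero; [|lra]. intros x _ k. unfold op_sub, Ushift_inv. rewrite calA_cons, calA_nil.
    unfold Upow_mult. simpl. replace (k - -1)%Z with (k+1)%Z by lia. unfold Cminus. ring.
  - intros a Ha eps He. exists ((0%Z, a) :: nil). split.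
    apply single_good. apply limits_bounded; auto. apply limits_slowvar; auto.
    apply opdist_zero; [|lra]. intros x _ k. unfold op_sub, mult_op. rewrite calA_cons, calA_nil.
    unfold Upow_mult. simpl. replace (k - 0)%Z with k by lia. unfold Cminus. ring.
  - intros T1 T2 H1 H2 eps He.
    destruct (H1 (eps/2) ltac:(lra)) as [l1 [G1 O1]]. destruct (H2 (eps/2) ltac:(lra)) as [l2 [G2 O2]].
    exists (l1 ++ l2). split. apply good_app; auto.
    replace eps with (eps/2 + eps/2) by lra.
    apply (opdist_ext (op_add (op_sub T1 (calA_elem l1)) (op_sub T2 (calA_elem l2)))).
    + intros x _ k. unfold op_add, op_sub. rewrite calA_app. unfold Cminus. ring.
    + apply opdist_add; auto.
  - intros c T H eps He.
    assert (Hc : 0 < eps / (Cmod c + 1)) by (apply Rdiv_lt_0_compat; pose proof (Cmod_ge_0 c); lra).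
    destruct (H _ Hc) as [l [G O]].
    exists (scal_list c l). split. apply good_scal; auto.
    apply (opdist_mono _ (Cmod c * (eps / (Cmod c + 1)))).
    { pose proof (Cmod_ge_0 c). apply Rmult_le_reg_r with (Cmod c + 1). lra.
      replace (Cmod c * (eps / (Cmod c + 1)) * (Cmod c + 1)) with (Cmod c * eps) by (field; lra). nra. }
    apply (opdist_ext (op_comp (mult_op (fun _ => c)) (op_sub T (calA_elem l)))).
    + intros x _ k. unfold op_comp, mult_op, op_sub, op_scal. rewrite calA_scal. unfold Cminus. ring.
    + apply opdist_comp; auto. apply Cmod_ge_0. apply mult_op_bound. intros; lra.
  - intros T1 T2 H1 H2 eps He.
    destruct (H2 1 ltac:(lra)) as [l0 [G0 O0]].
    destruct (calA_bounded l0 (good_bounded _ G0)) as [K0 [HK0 B0]].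
    assert (BT2 : opdist_le T2 (1 + K0)).
    { apply (opdist_ext (op_add (op_sub T2 (calA_elem l0)) (calA_elem l0))).
      - intros x _ k. unfold op_add, op_sub, Cminus. ring.
      - apply opdist_add; auto. }
    assert (E1 : 0 < eps / (2 * (1 + K0))) by (apply Rdiv_lt_0_compat; lra).
    destruct (H1 _ E1) as [l1 [G1 O1]].
    destruct (calA_bounded l1 (good_bounded _ G1)) as [K1 [HK1 B1]].
    assert (E2 : 0 < eps / (2 * (K1 + 1))) by (apply Rdiv_lt_0_compat; lra).
    destruct (H2 _ E2) as [l2 [G2 O2]].
    exists (prod_list l1 l2). split. apply good_prod; auto.
    apply (opdist_mono _ (eps / (2 * (1 + K0)) * (1 + K0) + K1 * (eps / (2 * (K1 + 1))))).
    { replace (eps / (2 * (1 + K0)) * (1 + K0)) with (eps/2) by (field; lra).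
      assert (K1 * (eps / (2 * (K1 + 1))) <= eps/2).
      { apply Rmult_le_reg_r with (K1 + 1). lra.
        replace (K1 * (eps / (2 * (K1 + 1))) * (K1 + 1)) with (K1 * eps / 2) by (field; lra). nra. }
      lra. }
    apply (opdist_ext (op_add (op_comp (op_sub T1 (calA_elem l1)) T2) (op_comp (calA_elem l1) (op_sub T2 (calA_elem l2))))).
    + intros x _ k. unfold op_add, op_comp, op_sub. rewrite calA_prod, calA_sub_x. unfold Cminus. ring.
    + apply opdist_add; apply opdist_comp; auto; lra.
  - intros T H eps He.
    destruct (H (eps/2) ltac:(lra)) as [T0 [HT0 O0]].
    destruct (HT0 (eps/2) ltac:(lra)) as [l [G O]].
    exists l. split; auto. replace eps with (eps/2 + eps/2) by lra.
    apply (opdist_ext (op_add (op_sub T T0) (op_sub T0 (calA_elem l)))).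
    + intros x _ k. unfold op_add, op_sub, Cminus. ring.
    + apply opdist_add; auto.
Qed.


Lemma coef_op T c m i : opdist_le T c -> Cmod (T (ev m) i) <= c.
Proof.
  intros H. destruct (ev_l2 m) as [Hl Hn]. destruct (H _ Hl) as [A B].
  pose proof (coef_bound _ i A). pose proof (vnorm_nonneg (ev m)). pose proof (vnorm_nonneg (T (ev m))).
  pose proof (coef_bound _ m Hl) as E. unfold ev at 1 in E. destruct (Z.eq_dec m m); [|lia].
  rewrite Cmod_1 in E.
  assert (0 <= c). { destruct (Rle_dec 0 c); auto. exfalso. nra. }
  nra.
Qed.

Definition Ulist : list (Z * (Z -> C)) := (1%Z, fun _ => RtoC 1) :: nil.

Lemma Ulist_ev k : calA_elem Ulist (ev k) = ev (k+1)%Z.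
Proof.
  apply functional_extensionality; intros i. unfold Ulist. rewrite calA_cons, calA_nil. unfold Upow_mult, ev. simpl.
  destruct (Z.eq_dec (i - 1) k); destruct (Z.eq_dec i (k+1)); try lia; ring.
Qed.

Lemma C4 a u v p q e : Cmod (Cminus a (Cminus u v)) <= e -> Cmod (Cminus u p) <= e ->
  Cmod (Cminus v q) <= e -> Cmod a <= 3 * e + Cmod (Cminus p q).
Proof.
  intros H1 H2 H3.
  replace a with (Cplus (Cplus (Cminus a (Cminus u v)) (Cminus u p)) (Cplus (Cminus p q) (Copp (Cminus v q)))) at 1
    by (unfold Cminus; ring).
  eapply Rle_trans. apply Cmod_triangle.
  pose proof (Cmod_triangle (Cminus a (Cminus u v)) (Cminus u p)).
  pose proof (Cmod_triangle (Cminus p q) (Copp (Cminus v q))). rewrite Cmod_opp in H0. lra.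
Qed.

Lemma incr_bound n beta X l' e :
  opdist_le (op_sub (cov_derivation n beta (calA_elem Ulist)) (commutator X (calA_elem Ulist))) e ->
  opdist_le (op_sub X (calA_elem l')) e ->
  forall k, Cmod (Cminus (beta (k+1)%Z) (beta k)) <= 3 * e + Cmod (Cminus (diag l' n (k+1)%Z) (diag l' n k)).
Proof.
  intros Hd HB k.
  pose proof (coef_op _ _ k (k + 1 + n)%Z Hd) as H1.
  pose proof (coef_op _ _ (k+1)%Z (k + 1 + n)%Z HB) as H2.
  pose proof (coef_op _ _ k (k + n)%Z HB) as H3.
  unfold op_sub in H2, H3. rewrite calA_ev in H2, H3.
  apply (C4 _ (X (ev (k+1)%Z) (k + 1 + n)%Z) (X (ev k) (k + n)%Z)); auto.
  unfold op_sub, cov_derivation, commutator, op_sub, op_comp in H1.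
  rewrite !Ulist_ev in H1. unfold Ulist in H1. rewrite calA_cons, calA_nil in H1.
  rewrite calA_cons, calA_nil in H1. unfold Upow_mult at 1 in H1.
  unfold Upow_mult at 2 in H1. simpl fst in H1; simpl snd in H1.
  unfold Upow_mult in H1. unfold ev at 1 2 in H1.
  replace (k + 1 + n - n)%Z with (k+1)%Z in H1 by lia.
  replace (k + 1 + n - 1 - n)%Z with k in H1 by lia.
  replace (k + 1 + n - 1)%Z with (k + n)%Z in H1 by lia.
  destruct (Z.eq_dec (k+1) (k+1)); [|lia]. destruct (Z.eq_dec k k); [|lia].
  replace (Cminus (beta (k + 1)%Z) (beta k)) with
    (Cminus (Cmult (beta (k + 1)%Z) 1) (Cplus (Cmult 1 (Cmult (beta k) 1)) 0)) by (unfold Cminus; ring).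
  eapply Rle_trans; [|exact H1]. right. f_equal. unfold Cminus. ring.
Qed.

Lemma Ulist_calA : calA_list Ulist.
Proof. constructor; [|constructor]. exists 0%Z. split; intros; reflexivity. Qed.

Theorem forward n beta : approx_inner (cov_derivation n beta) -> increments_to_zero beta.
Proof.
  intros [X [HA Hconv]].
  assert (HS : forall j, Sgood (X j)) by (intros j; apply HA; apply Sgood_closed).
  assert (key : forall eps, 0 < eps -> exists l', good l' /\
     forall k, Cmod (Cminus (beta (k+1)%Z) (beta k)) <= 3 * (eps/5) + Cmod (Cminus (diag l' n (k+1)%Z) (diag l' n k))).
  { intros eps He.
    destruct (Hconv Ulist Ulist_calA (eps/5) ltac:(lra)) as [N HN].
    destruct (HS N (eps/5) ltac:(lra)) as [l' [G HB]].
    exists l'. split; auto. apply incr_bound with (X := X N); auto. }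
  split; intros eps He; destruct (key eps He) as [l' [G Hk]];
    destruct (diag_slowvar l' n G) as [D1 D2].
  - destruct (D1 (eps/5) ltac:(lra)) as [N HN]. exists N. intros k Hk'.
    specialize (HN k Hk'). specialize (Hk k). lra.
  - destruct (D2 (eps/5) ltac:(lra)) as [N HN]. exists N. intros k Hk'.
    specialize (HN k Hk'). specialize (Hk k). lra.
Qed.


Definition clampJ (J k : Z) : Z := if Z_lt_dec k (-J) then (-J)%Z else if Z_lt_dec J k then J else k.
Definition betaj (beta : Z -> C) (j : nat) : Z -> C := fun k => beta (clampJ (Z.of_nat j) k).
Definition gam (beta : Z -> C) (j : nat) : Z -> C := fun k => Cminus (beta k) (betaj beta j k).

Lemma upow_in_S Sx b : closed_alg Sx -> Sx (mult_op b) -> forall n, Sx (Upow_mult n b).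
Proof.
  intros [HU [HUi [_ [_ [_ [Hc _]]]]]] Hb n.
  assert (Hpos : forall m : nat, Sx (Upow_mult (Z.of_nat m) b) /\ Sx (Upow_mult (- Z.of_nat m) b)).
  { induction m.
    - assert (E : Upow_mult 0 b = mult_op b).
      { apply functional_extensionality; intros x; apply functional_extensionality; intros k.
        unfold Upow_mult, mult_op. replace (k - 0)%Z with k by lia. auto. }
      simpl. rewrite E. auto.
    - destruct IHm as [A B]. split.
      + assert (E : Upow_mult (Z.of_nat (S m)) b = op_comp Ushift (Upow_mult (Z.of_nat m) b)).
        { apply functional_extensionality; intros x; apply functional_extensionality; intros k.
          unfold Upow_mult, op_comp, Ushift. replace (k - 1 - Z.of_nat m)%Z with (k - Z.of_nat (S m))%Z by lia. auto. }
        rewrite E. auto.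
      + assert (E : Upow_mult (- Z.of_nat (S m)) b = op_comp Ushift_inv (Upow_mult (- Z.of_nat m) b)).
        { apply functional_extensionality; intros x; apply functional_extensionality; intros k.
          unfold Upow_mult, op_comp, Ushift_inv. replace (k + 1 - - Z.of_nat m)%Z with (k - - Z.of_nat (S m))%Z by lia. auto. }
        rewrite E. auto. }
  destruct (Z_le_dec 0 n).
  - replace n with (Z.of_nat (Z.to_nat n)) by lia. apply Hpos.
  - replace n with (- Z.of_nat (Z.to_nat (- n)))%Z by lia. apply Hpos.
Qed.

Lemma evconst_limits a : eventually_const a -> has_limits_pm a.
Proof.
  intros [k0 [H1 H2]]. split.
  - exists (a k0). intros eps He. exists k0. intros k Hk. rewrite H1 by auto.
    replace (Cminus (a k0) (a k0)) with (RtoC 0) by (unfold Cminus; ring). rewrite Cmod_0. auto.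
  - exists (a (-k0)%Z). intros eps He. exists (-k0)%Z. intros k Hk. rewrite H2 by auto.
    replace (Cminus (a (-k0)%Z) (a (-k0)%Z)) with (RtoC 0) by (unfold Cminus; ring). rewrite Cmod_0. auto.
Qed.

Lemma betaj_inA n beta j : in_A (Upow_mult n (betaj beta j)).
Proof.
  intros Sx HS. apply upow_in_S; auto. destruct HS as [_ [_ [Hm _]]]. apply Hm.
  apply evconst_limits. exists (Z.of_nat j). split; intros k Hk; unfold betaj, clampJ.
  - repeat destruct Z_lt_dec; f_equal; lia.
  - repeat destruct Z_lt_dec; f_equal; lia.
Qed.

Lemma comm_single n m g a x k :
  commutator (Upow_mult n g) (Upow_mult m a) x k =
  Upow_mult (n + m) (fun i => Cminus (Cmult (g (i + m)%Z) (a i)) (Cmult (a (i + n)%Z) (g i))) x k.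
Proof.
  unfold commutator, op_sub, op_comp, Upow_mult.
  replace (k - (n + m) + m)%Z with (k - n)%Z by lia.
  replace (k - (n + m) + n)%Z with (k - m)%Z by lia.
  replace (k - n - m)%Z with (k - (n + m))%Z by lia.
  replace (k - m - n)%Z with (k - (n + m))%Z by lia.
  unfold Cminus. ring.
Qed.

Lemma tele_nat (g : Z -> C) B : (forall k, Cmod (Cminus (g (k+1)%Z) (g k)) <= B) ->
  forall (m : nat) i, Cmod (Cminus (g (i + Z.of_nat m)%Z) (g i)) <= INR m * B.
Proof.
  intros H m. induction m; intros i.
  - simpl. replace (i + 0)%Z with i by lia. replace (Cminus (g i) (g i)) with (RtoC 0) by (unfold Cminus; ring).
    rewrite Cmod_0. lra.
  - rewrite S_INR. eapply Rle_trans. apply (Cmod_sub_tri _ (g (i + Z.of_nat m)%Z)).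
    specialize (H (i + Z.of_nat m)%Z). replace (i + Z.of_nat m + 1)%Z with (i + Z.of_nat (S m))%Z in H by lia.
    specialize (IHm i). lra.
Qed.

Lemma tele_Z (g : Z -> C) B : (forall k, Cmod (Cminus (g (k+1)%Z) (g k)) <= B) ->
  forall m i, Cmod (Cminus (g (i + m)%Z) (g i)) <= INR (Z.abs_nat m) * B.
Proof.
  intros H m i. destruct (Z_le_dec 0 m).
  - pose proof (tele_nat g B H (Z.abs_nat m) i). replace (i + Z.of_nat (Z.abs_nat m))%Z with (i + m)%Z in H0 by lia. auto.
  - pose proof (tele_nat g B H (Z.abs_nat m) (i + m)%Z).
    replace (i + m + Z.of_nat (Z.abs_nat m))%Z with i in H0 by lia. rewrite Cmod_sym. auto.
Qed.

Lemma clamp_cases J k : (0 <= J)%Z ->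
  (clampJ J (k+1) = clampJ J k /\ (J <= k \/ k < -J)%Z) \/ (clampJ J (k+1) = (k+1)%Z /\ clampJ J k = k).
Proof. intros HJ. unfold clampJ. repeat destruct Z_lt_dec; lia. Qed.

Lemma gam_incr beta j B :
  (forall k, (Z.of_nat j <= k \/ k < - Z.of_nat j)%Z -> Cmod (Cminus (beta (k+1)%Z) (beta k)) <= B) -> 0 <= B ->
  forall k, Cmod (Cminus (gam beta j (k+1)%Z) (gam beta j k)) <= B.
Proof.
  intros H HB k. unfold gam, betaj.
  destruct (clamp_cases (Z.of_nat j) k ltac:(lia)) as [[E C]|[E1 E2]].
  - rewrite E. replace (Cminus (Cminus (beta (k + 1)%Z) (beta (clampJ (Z.of_nat j) k))) (Cminus (beta k) (beta (clampJ (Z.of_nat j) k))))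
      with (Cminus (beta (k+1)%Z) (beta k)) by (unfold Cminus; ring). auto.
  - rewrite E1, E2. replace (Cminus (Cminus (beta (k + 1)%Z) (beta (k+1)%Z)) (Cminus (beta k) (beta k))) with (RtoC 0)
      by (unfold Cminus; ring). rewrite Cmod_0. auto.
Qed.

Lemma gam_zero beta j i : (- Z.of_nat j <= i <= Z.of_nat j)%Z -> gam beta j i = RtoC 0.
Proof.
  intros H. unfold gam, betaj, clampJ. repeat destruct Z_lt_dec; try lia. unfold Cminus; ring.
Qed.

Lemma term_bound n beta m a : increments_to_zero beta -> eventually_const a ->
  forall eps, 0 < eps -> exists N : nat, forall j, (N <= j)%nat ->
    opdist_le (commutator (Upow_mult n (gam beta j)) (Upow_mult m a)) eps.
Proof.
  intros [I1 I2] Ha eps He.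
  destruct (limits_bounded a (evconst_limits a Ha)) as [Ka HKa].
  pose proof (bounded_nonneg _ _ HKa) as Ka0.
  set (M := INR (Z.abs_nat m)). assert (M0 : 0 <= M) by apply pos_INR.
  set (B := eps / ((M + 1) * (Ka + 1))).
  assert (B0 : 0 < B) by (apply Rdiv_lt_0_compat; nra).
  destruct (I1 B B0) as [N1 HN1]. destruct (I2 B B0) as [N2 HN2].
  destruct Ha as [k0 [Hk1 Hk2]].
  exists (Z.to_nat (Z.max (Z.max N1 (- N2)) (Z.abs k0 + Z.abs n))). intros j Hj.
  assert (HJ : (Z.max (Z.max N1 (- N2)) (Z.abs k0 + Z.abs n) <= Z.of_nat j)%Z) by lia.
  set (g := gam beta j).
  apply (opdist_ext (Upow_mult (n + m) (fun i => Cminus (Cmult (g (i + m)%Z) (a i)) (Cmult (a (i + n)%Z) (g i))))).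
  { intros x _ k. rewrite comm_single. reflexivity. }
  apply opdist_upow. intros i.
  assert (Hg : forall k, Cmod (Cminus (g (k+1)%Z) (g k)) <= B).
  { apply gam_incr; [|lra]. intros k [Hk|Hk].
    - left. apply HN1. lia.
    - left. apply HN2. lia. }
  assert (Hz : Cmult (g i) (Cminus (a i) (a (i + n)%Z)) = RtoC 0).
  { destruct (Z_le_dec (k0 + Z.abs n) i).
    - rewrite (Hk1 i) by lia. rewrite (Hk1 (i+n)%Z) by lia. unfold Cminus; ring.
    - destruct (Z_le_dec i (- k0 - Z.abs n)).
      + rewrite (Hk2 i) by lia. rewrite (Hk2 (i+n)%Z) by lia. unfold Cminus; ring.
      + unfold g. rewrite gam_zero by lia. ring. }
  replace (Cminus (Cmult (g (i + m)%Z) (a i)) (Cmult (a (i + n)%Z) (g i))) with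
    (Cplus (Cmult (Cminus (g (i + m)%Z) (g i)) (a i)) (Cmult (g i) (Cminus (a i) (a (i + n)%Z)))) by (unfold Cminus; ring).
  rewrite Hz. replace (Cplus (Cmult (Cminus (g (i + m)%Z) (g i)) (a i)) 0) with (Cmult (Cminus (g (i + m)%Z) (g i)) (a i)) by ring.
  rewrite Cmod_mult.
  pose proof (tele_Z g B Hg m i). fold M in H.
  pose proof (HKa i). pose proof (Cmod_ge_0 (a i)). pose proof (Cmod_ge_0 (Cminus (g (i + m)%Z) (g i))).
  assert (Cmod (Cminus (g (i + m)%Z) (g i)) * Cmod (a i) <= (M * B) * Ka) by nra.
  assert (M * B * Ka <= eps).
  { unfold B. replace (M * (eps / ((M + 1) * (Ka + 1))) * Ka) with (eps * ((M * Ka) / ((M + 1) * (Ka + 1)))) by (field; nra).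
    assert (M * Ka / ((M + 1) * (Ka + 1)) <= 1).
    { apply Rmult_le_reg_r with ((M + 1) * (Ka + 1)). nra.
      replace (M * Ka / ((M + 1) * (Ka + 1)) * ((M + 1) * (Ka + 1))) with (M * Ka) by (field; nra). nra. }
    assert (0 <= M * Ka / ((M + 1) * (Ka + 1))) by (apply Rdiv_le_0_compat; nra).
    nra. }
  lra.
Qed.

Lemma list_bound n beta l : increments_to_zero beta -> calA_list l ->
  forall eps, 0 < eps -> exists N : nat, forall j, (N <= j)%nat ->
    opdist_le (commutator (Upow_mult n (gam beta j)) (calA_elem l)) eps.
Proof.
  intros HI Hl. induction Hl as [|p l Hp Hl IH]; intros eps He.
  - exists 0%nat. intros j _. apply opdist_zero; [|lra]. intros x _ k.
    unfold commutator, op_sub, op_comp, Upow_mult. rewrite !calA_nil. unfold Cminus; ring.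
  - destruct (term_bound n beta (fst p) (snd p) HI Hp (eps/2) ltac:(lra)) as [N1 H1].
    destruct (IH (eps/2) ltac:(lra)) as [N2 H2].
    exists (Nat.max N1 N2). intros j Hj. replace eps with (eps/2 + eps/2) by lra.
    apply (opdist_ext (op_add (commutator (Upow_mult n (gam beta j)) (Upow_mult (fst p) (snd p)))
                              (commutator (Upow_mult n (gam beta j)) (calA_elem l)))).
    + intros x _ k. unfold op_add, commutator, op_sub, op_comp.
      change (calA_elem (p :: l) x) with (fun i => Cplus (Upow_mult (fst p) (snd p) x i) (calA_elem l x i)).
      rewrite upow_add_x, calA_cons. unfold Cminus; ring.
    + apply opdist_add; [apply H1 | apply H2]; lia.
Qed.

Theorem backward n beta : increments_to_zero beta -> approx_inner (cov_derivation n beta).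
Proof.
  intros HI. exists (fun j => Upow_mult n (betaj beta j)). split.
  - intros j. apply betaj_inA.
  - intros l Hl eps He. destruct (list_bound n beta l HI Hl eps He) as [N HN].
    exists N. intros j Hj. specialize (HN j Hj).
    refine (opdist_ext _ _ _ _ HN).
    intros x _ k.
    assert (E : Upow_mult n (gam beta j) x = fun i => Cminus (Upow_mult n beta x i) (Upow_mult n (betaj beta j) x i)).
    { apply functional_extensionality; intros i. unfold Upow_mult, gam, Cminus. ring. }
    unfold cov_derivation, commutator, op_sub, op_comp. rewrite E, calA_sub_x.
    unfold Upow_mult, gam, Cminus. ring.
Qed.


Theorem mainTheorem10 (n : Z) (beta : Z -> C) :
  conv_increments beta ->
  (approx_inner (cov_derivation n beta) <-> increments_to_zero beta).
Proof.
  intros _. split. apply forward. apply backward.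
Qed.
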